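(* Let $a>0$ and for $j\ge0$ put $$g_j=\Big(\frac a2\Big)^j\frac{(2j)!}{2^j\,j!\,j!}.$$ Then for every $j\ge5$, $$g_j\ \ge\ \frac1j\sum_{k=1}^{\lfloor (j-1)/2\rfloor}\ \sum_{j_1+\dots+j_k=j-k-1}\Big(\frac a2\Big)^{k+1}\frac{(k+1)(k+2)}{2}\prod_{p=1}^k\frac{g_{j_p}}{j_p+1},$$ where the inner sum is over ordered $k$-tuples $(j_1,\dots,j_k)$ of positive integers with $j_1+\dots+j_k=j-k-1$.
   Context: Here $\lfloor\cdot\rfloor$ denotes the integer part. Equivalently $g_j=(a/2)^j\frac{1\cdot3\cdots(2j-1)}{j!}$, the Taylor coefficients of $(1-at)^{-1/2}=\sum_{j\ge0}g_jt^j$. *)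

(* Defs.v *)
From HB Require Import structures.
From mathcomp Require Import all_boot all_order all_algebra.
Set Implicit Arguments. Unset Strict Implicit. Unset Printing Implicit Defensive.
Import Order.TTheory GRing.Theory Num.Theory.
Local Open Scope ring_scope.

Definition gcoef (R : realFieldType) (a : R) (j : nat) : R :=
  (a / 2) ^+ j * ((2 * j)`!)%:R / ((2 ^ j)%:R * (j`!)%:R * (j`!)%:R).

(* Main.v *)
Require Import Defs.
From HB Require Import structures.
From mathcomp Require Import all_boot all_order all_algebra.
From mathcomp.algebra_tactics Require Import ring lra.
From mathcomp Require Import zify.
Import Order.TTheory GRing.Theory Num.Theory.
Local Open Scope ring_scope.

Section B.
Variable R : realFieldType.

Definition bb (n : nat) : R := gcoef (1:R) n.

Lemma gcoefE (a : R) n : gcoef a n = a ^+ n * bb n.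
Proof. by rewrite /bb /gcoef exprMn mul1r !mulrA. Qed.

Lemma fact_neq0 n : (n`!)%:R != 0 :> R.
Proof. by rewrite pnatr_eq0 -lt0n fact_gt0. Qed.

Lemma bbS n : bb n.+1 = bb n * (2 * n + 1)%:R / (2 * n + 2)%:R.
Proof.
rewrite /bb /gcoef.
have -> : (2 * n.+1 = (2 * n).+2)%N by rewrite mulnS addnC addn2.
rewrite !factS expnS !natrM !exprS.
have h1 := fact_neq0 n. have h2 := fact_neq0 (2*n).
have h3 : (2 ^ n)%:R != 0 :> R by rewrite pnatr_eq0 expn_eq0.
have e1 : ((2*n).+2)%:R = 2 * n%:R + 2 :> R by rewrite -addn2 natrD natrM.
have e2 : ((2*n).+1)%:R = 2 * n%:R + 1 :> R by rewrite -addn1 natrD natrM.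
have e3 : (n.+1)%:R = n%:R + 1 :> R by rewrite -addn1 natrD.
have e4 : ((2*n+1)%:R = 2 * n%:R + 1 :> R) * ((2*n+2)%:R = 2 * n%:R + 2 :> R).
  by split; rewrite natrD natrM.
rewrite e1 e2 e3 !e4.
have h4 : (n%:R + 1 : R) != 0 by rewrite -e3 pnatr_eq0.
have h5 : (2 * n%:R + 2 : R) != 0 by rewrite -e4 pnatr_eq0 addn2.
field.
by rewrite h1 h3 h4 h5.
Qed.

Lemma bb0 : bb 0 = 1.
Proof. by rewrite /bb /gcoef muln0 fact0 expn0 expr0 !mul1r invr1. Qed.

Lemma bb_gt0 n : 0 < bb n.
Proof.
elim: n => [|n IH]; first by rewrite bb0.
rewrite bbS; apply: divr_gt0; last by rewrite ltr0n addn2.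
by apply: mulr_gt0 => //; rewrite ltr0n addn1.
Qed.

Lemma natS2 n : ((2 * n + 1)%:R = 2 * n%:R + 1 :> R) * ((2 * n + 2)%:R = 2 * n%:R + 2 :> R).
Proof. by split; rewrite natrD natrM. Qed.

Lemma bbS' n : (2 * n%:R + 2) * bb n.+1 = (2 * n%:R + 1) * bb n.
Proof.
rewrite bbS !natS2.
have h5 : (2 * n%:R + 2 : R) != 0 by rewrite -natS2 pnatr_eq0 addn2.
by field.
Qed.

Lemma sum_bb N : \sum_(n < N) bb n = 2 * N%:R * bb N.
Proof.
elim: N => [|N IH]; first by rewrite big_ord0 mulr0 mul0r.
rewrite big_ord_recr /= IH -natr1.
have := bbS' N. lra.
Qed.

Lemma sum_u N : \sum_(n < N) bb n / (n.+1)%:R = 2 - 2 * bb N.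
Proof.
elim: N => [|N IH]; first by rewrite big_ord0 bb0; lra.
rewrite big_ord_recr /= IH.
have -> : (N.+1)%:R = N%:R + 1 :> R by rewrite natr1.
have := bbS' N.
have h : (N%:R + 1 : R) != 0 by rewrite natr1 pnatr_eq0.
move=> E.
have -> : bb N / (N%:R + 1) = (2 * bb N - 2 * bb N.+1) by apply: (mulIf h); rewrite mulrBl divfK //; lra.
lra.
Qed.

Lemma bb_lo N : (1 <= N)%N -> 1 <= 4 * N%:R * bb N ^+ 2.
Proof.
elim: N => [//|N IH] _.
case: N IH => [_|N IH].
  have E := bbS' 0; rewrite bb0 mulr0 add0r mulr1 in E.
  have -> : bb 1 = 1/2 by lra.
  lra.
have {}IH := IH isT.
have E := bbS' N.+1.
set x := (N.+1)%:R in IH E *.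
rewrite -natr1 -/x.
have hx : 1 <= x by rewrite /x ler1n.
have hb := bb_gt0 N.+1.
have hb2 := bb_gt0 N.+2.
have F : (4 * (x+1)^+2) * bb N.+2 ^+ 2 = (2 * x + 1)^+2 * bb N.+1 ^+ 2.
  have -> : (4 * (x+1)^+2) = (2 * x + 2)^+2 by ring.
  by rewrite -!exprMn E.
have G : (x + 1) <= (2 * x + 1)^+2 * bb N.+1 ^+ 2 by nra.
have H : (x + 1) * 1 <= (x + 1) * (4 * (x + 1) * bb N.+2 ^+ 2) by nra.
by rewrite ler_pM2l in H; lra.
Qed.

Lemma bb_hi N : (3 * N%:R + 1) * bb N ^+ 2 <= 1.
Proof.
elim: N => [|N IH]; first by rewrite bb0; lra.
have E := bbS' N.
rewrite -natr1.
set x := N%:R in IH E *.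
have hx : 0 <= x by rewrite /x ler0n.
have hb := bb_gt0 N.
have hb2 := bb_gt0 N.+1.
set b := bb N in IH E hb *. set c := bb N.+1 in E hb2 *.
have F : (2 * x + 2)^+2 * c ^+ 2 = (2 * x + 1)^+2 * b ^+ 2 by rewrite -!exprMn E.
have G1 : (3 * x + 4) * (2 * x + 1)^+2 * b^+2 * (3 * x + 1) <= (3 * x + 4) * (2 * x + 1)^+2.
  have P : 0 <= (3 * x + 4) * (2 * x + 1)^+2 by nra.
  have := ler_wpM2l P IH. rewrite mulr1. move=> H.
  apply: (le_trans _ H); rewrite le_eqVlt; apply/orP; left; apply/eqP; ring.
have G2 : (3 * x + 4) * (2 * x + 1)^+2 * b^+2 * (3 * x + 1) <= (2 * x + 2)^+2 * (3 * x + 1) by nra.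
have G3 : (3 * x + 4) * (2 * x + 1)^+2 * b^+2 <= (2 * x + 2)^+2.
  by rewrite ler_pM2r in G2 => //; lra.
have G4 : (2 * x + 2)^+2 * ((3 * (x + 1) + 1) * c ^+ 2) <= (2 * x + 2)^+2 * 1.
  rewrite mulr1. apply: (le_trans _ G3); rewrite le_eqVlt; apply/orP; left; apply/eqP.
  have -> : (3 * x + 4) * (2 * x + 1) ^+ 2 * b ^+ 2 = (3 * x + 4) * ((2 * x + 1) ^+ 2 * b ^+ 2) by ring.
  rewrite -F; ring.
by rewrite ler_pM2l in G4 => //; nra.
Qed.
End B.

Section D.
Variable R : realFieldType.

Definition Q3 (K : R) (y : R) : R :=
  (K+1)*(K+2)*(K+3)/y + 3*(K+2)*(K+3)*(1-y)/y^+2 + 6*(K+3)*(1-y)^+2/y^+3 + 6*(1-y)^+3/y^+4.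
Definition Q4 (K : R) (y : R) : R :=
  (K+1)^+2*(K+2)*(K+3)/y + (K+2)*(K+3)*(4*K+7)*(1-y)/y^+2 + 6*(K+3)*(2*K+5)*(1-y)^+2/y^+3
  + (24*K+78)*(1-y)^+3/y^+4 + 24*(1-y)^+4/y^+5.

Lemma Q3_ge0 K y : 0 <= K -> 0 < y -> y <= 1 -> 0 <= Q3 K y.
Proof.
move=> hK hy hy1; rewrite /Q3.
have h1 : 0 <= 1 - y by lra.
repeat apply: addr_ge0; apply: divr_ge0; try apply: exprn_ge0; try lra;
  repeat apply: mulr_ge0; try apply: exprn_ge0; lra.
Qed.

Lemma Q4_ge0 K y : 0 <= K -> 0 < y -> y <= 1 -> 0 <= Q4 K y.
Proof.
move=> hK hy hy1; rewrite /Q4.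
have h1 : 0 <= 1 - y by lra.
repeat apply: addr_ge0; apply: divr_ge0; try apply: exprn_ge0; try lra;
  repeat apply: mulr_ge0; try apply: exprn_ge0; lra.
Qed.

Lemma Q3_rec (y k : R) : y != 0 -> Q3 k y = (k+1)*(k+2)*(k+3) + (1-y) * Q3 (k+1) y.
Proof. move=> h; rewrite /Q3; field. exact: h. Qed.

Lemma Q4_rec (y k : R) : y != 0 -> Q4 k y = (k+1)^+2*(k+2)*(k+3) + (1-y) * Q4 (k+1) y.
Proof. move=> h; rewrite /Q4; field. exact: h. Qed.

Lemma S3_id (y : R) (K : nat) : 0 < y ->
  \sum_(0 <= k < K) (k%:R+1)*(k%:R+2)*(k%:R+3) * (1-y)^+k + (1-y)^+K * Q3 K%:R y = Q3 0 y.
Proof.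
move=> hy; have hy0 : y != 0 by rewrite gt_eqF.
elim: K => [|K IH]; first by rewrite big_geq // add0r expr0 mul1r.
rewrite big_nat_recr //= -IH -addrA; congr (_ + _).
have -> : (K.+1)%:R = K%:R + 1 :> R by rewrite natr1.
rewrite (Q3_rec y K%:R hy0) exprS; ring.
Qed.

Lemma S4_id (y : R) (K : nat) : 0 < y ->
  \sum_(0 <= k < K) (k%:R+1)^+2*(k%:R+2)*(k%:R+3) * (1-y)^+k + (1-y)^+K * Q4 K%:R y = Q4 0 y.
Proof.
move=> hy; have hy0 : y != 0 by rewrite gt_eqF.
elim: K => [|K IH]; first by rewrite big_geq // add0r expr0 mul1r.
rewrite big_nat_recr //= -IH -addrA; congr (_ + _).
have -> : (K.+1)%:R = K%:R + 1 :> R by rewrite natr1.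
rewrite (Q4_rec y K%:R hy0) [(1-y)^+K.+1]exprS; ring.
Qed.

Lemma S3_le (y : R) (K : nat) : 0 < y -> y <= 1 ->
  \sum_(1 <= k < K.+1) (k%:R)*(k%:R+1)*(k%:R+2) * (1-y)^+k.-1 <= 6 / y^+4.
Proof.
move=> hy hy1.
have -> : 6 / y^+4 = Q3 0 y.
  rewrite /Q3; have hy0 : y != 0 by rewrite gt_eqF. field. by rewrite hy0.
rewrite -(S3_id y K hy) big_add1 /=.
have : 0 <= (1-y)^+K * Q3 K%:R y.
  apply: mulr_ge0; first by apply: exprn_ge0; lra.
  by apply: Q3_ge0 => //; rewrite ler0n.
suff -> : \sum_(0 <= i < K) i.+1%:R * (i.+1%:R + 1) * (i.+1%:R + 2) * (1 - y) ^+ i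
  = \sum_(0 <= k < K) (k%:R + 1) * (k%:R + 2) * (k%:R + 3) * (1 - y) ^+ k by lra.
apply: eq_bigr => i _; have -> : (i.+1)%:R = i%:R + 1 :> R by rewrite natr1.
ring.
Qed.

Lemma S4_le (y : R) (K : nat) : 0 < y -> y <= 1 ->
  \sum_(1 <= k < K.+1) (k%:R)^+2*(k%:R+1)*(k%:R+2) * (1-y)^+k.-1 <= Q4 0 y.
Proof.
move=> hy hy1.
rewrite -(S4_id y K hy) big_add1 /=.
have : 0 <= (1-y)^+K * Q4 K%:R y.
  apply: mulr_ge0; first by apply: exprn_ge0; lra.
  by apply: Q4_ge0 => //; rewrite ler0n.
suff -> : \sum_(0 <= i < K) i.+1%:R ^+ 2 * (i.+1%:R + 1) * (i.+1%:R + 2) * (1 - y) ^+ i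
  = \sum_(0 <= k < K) (k%:R + 1) ^+ 2 * (k%:R + 2) * (k%:R + 3) * (1 - y) ^+ k by lra.
apply: eq_bigr => i _; have -> : (i.+1)%:R = i%:R + 1 :> R by rewrite natr1.
ring.
Qed.
End D.

Section C.
Variable R : realFieldType.
Definition cc (j k : nat) : R := (1/2)^+k.+1 * ((k.+1 * k.+2)%:R / 2) * k%:R / (j - k - 1)%:R.
Definition Phi (j : nat) (U : R) := \sum_(1 <= k < ((j - 1) %/ 2).+1) cc j k * U ^+ (k.-1).

Lemma cc_ge0 j k : 0 <= cc j k.
Proof.
rewrite /cc; apply: divr_ge0; last exact: ler0n.
apply: mulr_ge0; last exact: ler0n.
apply: mulr_ge0; first by apply: exprn_ge0; lra.
by apply: divr_ge0; [exact: ler0n | lra].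
Qed.

Lemma Phi_mono j U U0 : 0 <= U -> U <= U0 -> Phi j U <= Phi j U0.
Proof.
move=> h0 h1; apply: ler_sum => k _; apply: ler_wpM2l; first exact: cc_ge0.
apply: lerXn2r => //; rewrite ?inE ?nnegrE //; exact: le_trans h1.
Qed.

Lemma ccE j k : (k.+1 < j)%N ->
  cc j k = (1/2)^+k.+1 * ((k%:R + 1) * (k%:R + 2) / 2) * k%:R / (j%:R - k%:R - 1).
Proof.
move=> h; rewrite /cc.
have -> : (k.+1 * k.+2)%:R = (k%:R+1)*(k%:R+2) :> R by rewrite natrM -[k.+2]addn2 -[k.+1]addn1 !natrD.
rewrite -subnDA natrB ?addn1 -?natr1 ?opprD ?addrA //; exact: ltnW.
Qed.

End C.

Section E.
Variable R : realFieldType.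
Lemma half_pow k : (1/2 : R)^+k.+2 * 2^+k = 1/4.
Proof.
rewrite (_ : k.+2 = k + 2)%N; last by rewrite addn2.
rewrite exprD mulrC mulrA -exprMn.
have -> : (2 * (1/2) : R) = 1 by field.
by rewrite expr1n mul1r; field.
Qed.

Lemma inv_le (N kk : R) : 1 <= kk -> 2 * kk <= N -> 1 / (N - kk) <= (N + 2 * kk) / N^+2.
Proof.
move=> h1 h2.
have hN : N != 0 by rewrite gt_eqF //; lra.
have hNk : N - kk != 0 by rewrite gt_eqF //; lra.
rewrite -subr_ge0.
have -> : (N + 2 * kk) / N ^+ 2 - 1 / (N - kk) = kk * (N - 2 * kk) / (N^+2 * (N - kk)).
  by field; rewrite hN hNk.
apply: divr_ge0; first by apply: mulr_ge0; lra.
apply: mulr_ge0; first by apply: exprn_ge0; lra.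
lra.
Qed.

Lemma term_le (j k : nat) (z : R) : (5 <= j)%N -> (1 <= k)%N -> (k <= (j - 1) %/ 2)%N -> 0 <= z ->
  cc R j k * (2 * z) ^+ k.-1 <=
  1/8 * (k%:R * (k%:R+1) * (k%:R+2) * z^+k.-1) / (j%:R - 1)
  + 1/4 * (k%:R^+2 * (k%:R+1) * (k%:R+2) * z^+k.-1) / (j%:R - 1)^+2.
Proof.
move=> hj hk1 hk2 hz.
have h2k : (k * 2 <= j - 1)%N by rewrite -leq_divRL.
have hkj : (k.+1 < j)%N by lia.
rewrite ccE //.
have hN : 2 * k%:R <= j%:R - 1 :> R.
  have : ((k * 2)%:R <= (j - 1)%:R :> R) by rewrite ler_nat.
  by rewrite natrM natrB ?(leq_trans _ hj) // mulrC.
have hk : 1 <= k%:R :> R by rewrite ler1n.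
case: k hk1 hk2 h2k hkj hN hk => // k _ _ _ _ hN hk /=.
rewrite [(2 * z)^+k]exprMn.
have hZ : 0 <= z^+k by apply: exprn_ge0.
move: (half_pow k) hZ; move: ((1/2 : R)^+k.+2) ((2:R)^+k) (z^+k) => P Q Z hPQ hZ.
move: hN hk; move: (k.+1%:R) => kk hN hk.
have -> : j%:R - kk - 1 = (j%:R - 1) - kk by ring.
move: hN; move: (j%:R - 1 : R) => N hN.
have -> : P * ((kk + 1) * (kk + 2) / 2) * kk / (N - kk) * (Q * Z)
    = (P * Q) * (kk * (kk + 1) * (kk + 2) * Z / 2) * (1 / (N - kk)) by rewrite !mulrA; ring.
rewrite hPQ.
have -> : 1 / 8 * (kk * (kk + 1) * (kk + 2) * Z) / N + 1 / 4 * (kk ^+ 2 * (kk + 1) * (kk + 2) * Z) / N ^+ 2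
   = 1/4 * (kk * (kk + 1) * (kk + 2) * Z / 2) * ((N + 2 * kk) / N^+2).
  have hN0 : N != 0 by rewrite gt_eqF //; lra.
  by field.
apply: ler_wpM2l; last exact: inv_le.
apply: mulr_ge0; first lra.
apply: divr_ge0; last lra.
repeat apply: mulr_ge0; lra.
Qed.

Lemma chunk (j : nat) (z : R) : (5 <= j)%N -> 0 <= z -> z < 1 ->
  Phi R j (2 * z) <= 1/8 * (6 / (1 - z)^+4) / (j%:R - 1) + 1/4 * Q4 R 0 (1 - z) / (j%:R - 1)^+2.
Proof.
move=> hj hz hz1.
rewrite /Phi.
apply: le_trans.
  apply: ler_sum_nat => k /andP[hk1 hk2].
  apply: term_le => //; by rewrite -ltnS.
rewrite big_split /= -!mulr_suml -!mulr_sumr.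
have hj' : 5%:R <= j%:R :> R by rewrite ler_nat.
have hN : 4 <= j%:R - 1 :> R by lra.
have hy : 0 < 1 - z by lra.
have hy1 : 1 - z <= 1 by lra.
have H3 := S3_le R (1 - z) ((j - 1) %/ 2) hy hy1.
have H4 := S4_le R (1 - z) ((j - 1) %/ 2) hy hy1.
rewrite opprB addrC subrK in H3 H4.
apply: lerD.
  rewrite ler_pM2r; last by rewrite invr_gt0; lra.
  by apply: ler_wpM2l => //; lra.
rewrite ler_pM2r; last by rewrite invr_gt0; apply: exprn_gt0; lra.
by apply: ler_wpM2l => //; lra.
Qed.
End E.

Section F.
Variable R : realFieldType.

Ltac natnorm := repeat match goal with |- context [ GRing.natmul 1 ?n ] => let c := eval vm_compute in n in progress (change n with c) end.

Lemma Phi_ge0 j (U : R) : 0 <= U -> 0 <= Phi R j U.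
Proof. move=> hU; apply: sumr_ge0 => k _; apply: mulr_ge0; [exact: cc_ge0 | exact: exprn_ge0]. Qed.

Lemma close (T P T0 D : R) : 1/2 <= T -> T <= T0 -> 0 <= P -> P <= D -> D * (2*T0 - 1) <= T0 ->
  (2*T - 1) * P <= T.
Proof.
move=> h1 h2 h3 h4 h5.
have e1 : (2*T - 1) * P <= (2*T - 1) * D by apply: ler_wpM2l; lra.
apply: le_trans e1 _.
have [hD|hD] := lerP D (1/2); first nra.
nra.
Qed.

Lemma numcase j (lo T0 D b : R) : (5 <= j)%N -> 0 < b -> 1 <= 4 * j%:R * b^+2 -> (3 * j%:R + 1) * b^+2 <= 1 ->
  0 <= lo -> 4 * j%:R * lo^+2 <= 1 -> j%:R^+2 <= T0^+2 * (3 * j%:R + 1) -> 0 <= T0 ->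
  Phi R j (1 - 2 * lo) <= D -> D * (2 * T0 - 1) <= T0 ->
  (2 * j%:R * b - 1) * Phi R j (1 - 2 * b) <= j%:R * b.
Proof.
move=> hj hb hlo hhi hlo0 hlo1 hT0 hT00 hP hD.
have hj' : 5 <= j%:R :> R by rewrite (ler_nat R 5 j).
have hb4 : b <= 1/4 by nra.
have hblo : lo <= b by nra.
have hT1 : 1/2 <= j%:R * b by nra.
have hTT : (j%:R * b)^+2 <= T0^+2.
  have : (j%:R * b)^+2 * (3 * j%:R + 1) <= T0^+2 * (3 * j%:R + 1).
    apply: le_trans hT0. rewrite exprMn -mulrA [b^+2 * _]mulrC. 
    have hjj : 0 <= j%:R^+2 :> R by apply: exprn_ge0; lra.
    have := ler_wpM2l hjj hhi. by rewrite mulr1.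
  by rewrite ler_pM2r //; lra.
have hT : j%:R * b <= T0 by nra.
have hU0 : 0 <= 1 - 2*b by lra.
have hU1 : 1 - 2*b <= 1 - 2*lo by lra.
have H := close _ _ _ _ hT1 hT (Phi_ge0 j _ hU0) (le_trans (Phi_mono R j _ _ hU0 hU1) hP) hD.
by rewrite mulrA in H.
Qed.

Lemma Phi_5 : Phi R 5 (1 - 2 * (223/1000)) <= 17/25.
Proof.
rewrite /Phi (_ : ((5 - 1) %/ 2).+1 = 3)%N // big_ltn // big_ltn // big_geq // /cc /=; natnorm; lra.
Qed.

Lemma fin_5 (b : R) : 0 < b -> 1 <= 4 * 5%:R * b^+2 -> (3 * 5%:R + 1) * b^+2 <= 1 ->
  (2 * 5%:R * b - 1) * Phi R 5 (1 - 2 * b) <= 5%:R * b.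
Proof.
move=> h1 h2 h3; apply: (numcase _ (223/1000) (5/4) (17/25) b) => //; try (natnorm; lra).
exact: Phi_5.
Qed.

Lemma Phi_6 : Phi R 6 (1 - 2 * (51/250)) <= 1/2.
Proof.
rewrite /Phi (_ : ((6 - 1) %/ 2).+1 = 3)%N // big_ltn // big_ltn // big_geq // /cc /=; natnorm; lra.
Qed.

Lemma fin_6 (b : R) : 0 < b -> 1 <= 4 * 6%:R * b^+2 -> (3 * 6%:R + 1) * b^+2 <= 1 ->
  (2 * 6%:R * b - 1) * Phi R 6 (1 - 2 * b) <= 6%:R * b.
Proof.
move=> h1 h2 h3; apply: (numcase _ (51/250) (69/50) (1/2) b) => //; try (natnorm; lra).
exact: Phi_6.
Qed.

Lemma Phi_7 : Phi R 7 (1 - 2 * (47/250)) <= 16/25.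
Proof.
rewrite /Phi (_ : ((7 - 1) %/ 2).+1 = 4)%N // big_ltn // big_ltn // big_ltn // big_geq // /cc /=; natnorm; lra.
Qed.

Lemma fin_7 (b : R) : 0 < b -> 1 <= 4 * 7%:R * b^+2 -> (3 * 7%:R + 1) * b^+2 <= 1 ->
  (2 * 7%:R * b - 1) * Phi R 7 (1 - 2 * b) <= 7%:R * b.
Proof.
move=> h1 h2 h3; apply: (numcase _ (47/250) (3/2) (16/25) b) => //; try (natnorm; lra).
exact: Phi_7.
Qed.

Lemma Phi_8 : Phi R 8 (1 - 2 * (22/125)) <= 53/100.
Proof.
rewrite /Phi (_ : ((8 - 1) %/ 2).+1 = 4)%N // big_ltn // big_ltn // big_ltn // big_geq // /cc /=; natnorm; lra.
Qed.

Lemma fin_8 (b : R) : 0 < b -> 1 <= 4 * 8%:R * b^+2 -> (3 * 8%:R + 1) * b^+2 <= 1 ->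
  (2 * 8%:R * b - 1) * Phi R 8 (1 - 2 * b) <= 8%:R * b.
Proof.
move=> h1 h2 h3; apply: (numcase _ (22/125) (8/5) (53/100) b) => //; try (natnorm; lra).
exact: Phi_8.
Qed.

Lemma Phi_9 : Phi R 9 (1 - 2 * (83/500)) <= 3/5.
Proof.
rewrite /Phi (_ : ((9 - 1) %/ 2).+1 = 5)%N // big_ltn // big_ltn // big_ltn // big_ltn // big_geq // /cc /=; natnorm; lra.
Qed.

Lemma fin_9 (b : R) : 0 < b -> 1 <= 4 * 9%:R * b^+2 -> (3 * 9%:R + 1) * b^+2 <= 1 ->
  (2 * 9%:R * b - 1) * Phi R 9 (1 - 2 * b) <= 9%:R * b.
Proof.
move=> h1 h2 h3; apply: (numcase _ (83/500) (171/100) (3/5) b) => //; try (natnorm; lra).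
exact: Phi_9.
Qed.

Lemma Phi_10 : Phi R 10 (1 - 2 * (79/500)) <= 13/25.
Proof.
rewrite /Phi (_ : ((10 - 1) %/ 2).+1 = 5)%N // big_ltn // big_ltn // big_ltn // big_ltn // big_geq // /cc /=; natnorm; lra.
Qed.

Lemma fin_10 (b : R) : 0 < b -> 1 <= 4 * 10%:R * b^+2 -> (3 * 10%:R + 1) * b^+2 <= 1 ->
  (2 * 10%:R * b - 1) * Phi R 10 (1 - 2 * b) <= 10%:R * b.
Proof.
move=> h1 h2 h3; apply: (numcase _ (79/500) (9/5) (13/25) b) => //; try (natnorm; lra).
exact: Phi_10.
Qed.

Lemma Phi_11 : Phi R 11 (1 - 2 * (3/20)) <= 11/20.
Proof.
rewrite /Phi (_ : ((11 - 1) %/ 2).+1 = 6)%N // big_ltn // big_ltn // big_ltn // big_ltn // big_ltn // big_geq // /cc /=; natnorm; lra.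
Qed.

Lemma fin_11 (b : R) : 0 < b -> 1 <= 4 * 11%:R * b^+2 -> (3 * 11%:R + 1) * b^+2 <= 1 ->
  (2 * 11%:R * b - 1) * Phi R 11 (1 - 2 * b) <= 11%:R * b.
Proof.
move=> h1 h2 h3; apply: (numcase _ (3/20) (189/100) (11/20) b) => //; try (natnorm; lra).
exact: Phi_11.
Qed.

Lemma Phi_12 : Phi R 12 (1 - 2 * (18/125)) <= 49/100.
Proof.
rewrite /Phi (_ : ((12 - 1) %/ 2).+1 = 6)%N // big_ltn // big_ltn // big_ltn // big_ltn // big_ltn // big_geq // /cc /=; natnorm; lra.
Qed.

Lemma fin_12 (b : R) : 0 < b -> 1 <= 4 * 12%:R * b^+2 -> (3 * 12%:R + 1) * b^+2 <= 1 ->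
  (2 * 12%:R * b - 1) * Phi R 12 (1 - 2 * b) <= 12%:R * b.
Proof.
move=> h1 h2 h3; apply: (numcase _ (18/125) (99/50) (49/100) b) => //; try (natnorm; lra).
exact: Phi_12.
Qed.

Lemma Phi_13 : Phi R 13 (1 - 2 * (69/500)) <= 1/2.
Proof.
rewrite /Phi (_ : ((13 - 1) %/ 2).+1 = 7)%N // big_ltn // big_ltn // big_ltn // big_ltn // big_ltn // big_ltn // big_geq // /cc /=; natnorm; lra.
Qed.

Lemma fin_13 (b : R) : 0 < b -> 1 <= 4 * 13%:R * b^+2 -> (3 * 13%:R + 1) * b^+2 <= 1 ->
  (2 * 13%:R * b - 1) * Phi R 13 (1 - 2 * b) <= 13%:R * b.
Proof.
move=> h1 h2 h3; apply: (numcase _ (69/500) (103/50) (1/2) b) => //; try (natnorm; lra).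
exact: Phi_13.
Qed.

Lemma chunk_y j (y : R) : (5 <= j)%N -> 0 < y -> y <= 1 ->
  Phi R j (2 * (1 - y)) <= 1/8 * (6 / y^+4) / (j%:R - 1) + 1/4 * Q4 R 0 y / (j%:R - 1)^+2.
Proof.
move=> hj hy hy1.
have H := chunk R j (1 - y) hj ltac:(lra) ltac:(lra).
by rewrite (_ : 1 - (1 - y) = y) in H; last ring.
Qed.

Lemma bigN (A B A0 B0 Na N D : R) : 0 < Na -> Na <= N -> 0 <= A -> A <= A0 -> 0 <= B -> B <= B0 ->
  A0 / Na + B0 / Na^+2 <= D -> A / N + B / N^+2 <= D.
Proof.
move=> h1 h2 h3 h4 h5 h6 h7.
apply: le_trans h7.
have hN : 0 < N by lra.
apply: lerD.
  rewrite ler_pdivrMr // mulrAC ler_pdivlMr //. nra.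
have hN2 : 0 < N^+2 by apply: exprn_gt0.
have hNa2 : 0 < Na^+2 by apply: exprn_gt0.
rewrite ler_pdivrMr // mulrAC ler_pdivlMr //.
have : Na^+2 <= N^+2 by rewrite lerXn2r // ?nnegrE; lra.
nra.
Qed.

Lemma Q4_ge0' (y : R) : 0 < y -> y <= 1 -> 0 <= Q4 R 0 y.
Proof. by move=> h1 h2; apply: Q4_ge0 => //; lra. Qed.

Lemma chunk_num j (y A0 B0 Na D : R) : (5 <= j)%N -> 0 < y -> y <= 1 -> 0 < Na -> Na <= j%:R - 1 ->
  1/8 * (6 / y^+4) <= A0 -> 1/4 * Q4 R 0 y <= B0 -> A0 / Na + B0 / Na^+2 <= D ->
  Phi R j (2 * (1 - y)) <= D.
Proof.
move=> hj hy hy1 hNa hNaN hA hB hD.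
apply: le_trans (chunk_y _ _ hj hy hy1) _.
apply: (bigN _ _ _ _ _ _ _ hNa hNaN _ hA _ hB hD).
  apply: mulr_ge0; first lra. apply: divr_ge0; first lra. apply: exprn_ge0; lra.
apply: mulr_ge0; first lra. exact: Q4_ge0'.
Qed.

Lemma final_ineq j (b : R) : (5 <= j)%N -> 0 < b -> 1 <= 4 * j%:R * b^+2 -> (3 * j%:R + 1) * b^+2 <= 1 ->
  (2 * j%:R * b - 1) * Phi R j (1 - 2 * b) <= j%:R * b.
Proof.
move=> hj hb hlo hhi.
have hj' : 5 <= j%:R :> R by rewrite (ler_nat R 5 j).
have [h13|h14] := leqP j 13.
  move: hj h13 hlo hhi hj'.
  case: j => [|[|[|[|[|[|[|[|[|[|[|[|[|[|j]]]]]]]]]]]]]] //= _ hh hlo hhi _.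
  all: try first [ by exfalso; lia | exact: (fin_5 _ hb hlo hhi) | exact: (fin_6 _ hb hlo hhi) | exact: (fin_7 _ hb hlo hhi) | exact: (fin_8 _ hb hlo hhi) | exact: (fin_9 _ hb hlo hhi) | exact: (fin_10 _ hb hlo hhi) | exact: (fin_11 _ hb hlo hhi) | exact: (fin_12 _ hb hlo hhi) | exact: (fin_13 _ hb hlo hhi) ].
have h14' : 14 <= j%:R :> R by rewrite (ler_nat R 14 j).
have [h17|h18] := leqP j 17.
  have h17' : j%:R <= 17 :> R by rewrite (ler_nat R j 17).
  apply: (numcase _ (12/100) (236/100) (6/10) b) => //; try lra.
  - nra.
  rewrite (_ : 1 - 2 * (12/100) = 2 * (1 - 62/100) :> R); last by field.
  apply: (chunk_num _ _ (508/100) (351/10) 13) => //; try lra.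
  - by rewrite /Q4 -!exprVn !invf_div; lra.
have h18' : 18 <= j%:R :> R by rewrite (ler_nat R 18 j).
have [h33|h34] := leqP j 33.
  have h33' : j%:R <= 33 :> R by rewrite (ler_nat R j 33).
  apply: (numcase _ (85/1000) (331/100) (55/100) b) => //; try lra.
  - nra.
  rewrite (_ : 1 - 2 * (85/1000) = 2 * (1 - 585/1000) :> R); last by field.
  apply: (chunk_num _ _ (641/100) (492/10) 17) => //; try lra.
  - by rewrite /Q4 -!exprVn !invf_div; lra.
have h34' : 34 <= j%:R :> R by rewrite (ler_nat R 34 j).
apply: (numcase _ 0 (j%:R) (1/2) b) => //; try lra.
- nra.
rewrite (_ : 1 - 2 * 0 = 2 * (1 - 1/2) :> R); last by field.
apply: (chunk_num _ _ 12 120 33) => //; try lra.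
- by rewrite /Q4 -!exprVn !invf_div; lra.
Qed.
End F.

Section G.
Variable R : realFieldType.

Definition GG (u : nat -> R) (j k : nat) (p q : 'I_k) (n : 'I_j) : R :=
  if (0 < n)%N then (if q == p then (n : nat)%:R * u n else u n) else 0.

Lemma GG_ge0 u j k p q n : (forall n, 0 <= u n) -> 0 <= GG u j k p q n.
Proof.
move=> hu; rewrite /GG; case: ifP => // _; case: ifP => // _.
by apply: mulr_ge0 => //; rewrite ler0n.
Qed.

Lemma CL (u : nat -> R) j k m : (forall n, 0 <= u n) ->
  m%:R * \sum_(t : {ffun 'I_k -> 'I_j} | ((\sum_(p < k) (t p : nat))%N == m) && [forall p, (0 < t p)%N])
     \prod_(p < k) u (t p)
  <= k%:R * (\sum_(n < j | (0 < n)%N) n%:R * u n) * (\sum_(n < j | (0 < n)%N) u n) ^+ k.-1.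
Proof.
move=> hu.
rewrite mulr_sumr.
apply: (@le_trans _ _ (\sum_(t : {ffun 'I_k -> 'I_j} | ((\sum_(p < k) (t p : nat))%N == m) && [forall p, (0 < t p)%N])
     \sum_(p < k) \prod_(q < k) GG u j k p q (t q))).
  apply: ler_sum => t /andP[/eqP hs /forallP hpos].
  rewrite -hs natr_sum mulr_suml; apply: ler_sum => p _.
  rewrite (bigD1 p) //= [X in _ <= X](bigD1 p) //= {1}/GG hpos eqxx mulrA.
  rewrite le_eqVlt; apply/orP; left; apply/eqP; congr (_ * _).
  by apply: eq_bigr => q hq; rewrite /GG hpos (negbTE hq).
apply: (@le_trans _ _ (\sum_(t : {ffun 'I_k -> 'I_j}) \sum_(p < k) \prod_(q < k) GG u j k p q (t q))).
  rewrite [X in _ <= X](bigID (fun t : {ffun 'I_k -> 'I_j} => ((\sum_(p < k) (t p : nat))%N == m) && [forall p, (0 < t p)%N])) /=.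
  rewrite lerDl; apply: sumr_ge0 => t _; apply: sumr_ge0 => p _; apply: prodr_ge0 => q _; exact: GG_ge0.
rewrite exchange_big /=.
have E : forall p : 'I_k, \sum_(t : {ffun 'I_k -> 'I_j}) \prod_(q < k) GG u j k p q (t q)
   = (\sum_(n < j | (0 < n)%N) n%:R * u n) * (\sum_(n < j | (0 < n)%N) u n) ^+ k.-1.
  move=> p.
  rewrite -(bigA_distr_bigA (GG u j k p)) /= (bigD1 p) //=.
  congr (_ * _).
    rewrite [RHS]big_mkcond /=; apply: eq_bigr => n _; by rewrite /GG eqxx.
  rewrite (eq_bigr (fun _ => \sum_(n < j | (0 < n)%N) u n)).
    by rewrite prodr_const cardC1 card_ord.
  move=> q hq; rewrite [RHS]big_mkcond /=; apply: eq_bigr => n _; by rewrite /GG (negbTE hq).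
rewrite (eq_bigr _ (fun p _ => E p)) sumr_const card_ord.
by rewrite -mulrA mulr_natl.
Qed.
End G.

Section H.
Variable R : realFieldType.

Definition uu (n : nat) : R := bb R n / (n.+1)%:R.

Lemma uu_ge0 n : 0 <= uu n.
Proof. by rewrite /uu; apply: divr_ge0; [apply: ltW; apply: bb_gt0 | rewrite ler0n]. Qed.

Lemma sum_pos (F : nat -> R) j : (0 < j)%N ->
  \sum_(n < j | (0 < n)%N) F n = \sum_(n < j) F n - F 0%N.
Proof.
case: j => // j _.
rewrite big_mkcond /= big_ord_recl /= [X in _ = X - _]big_ord_recl /= add0r.
by rewrite addrC addKr.
Qed.

Lemma U_eq j : (0 < j)%N -> \sum_(n < j | (0 < n)%N) uu n = 1 - 2 * bb R j.
Proof.
move=> hj; rewrite sum_pos // /uu sum_u bb0; lra.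
Qed.

Lemma A_le j : (0 < j)%N -> \sum_(n < j | (0 < n)%N) n%:R * uu n <= 2 * j%:R * bb R j - 1.
Proof.
move=> hj.
apply: (@le_trans _ _ (\sum_(n < j | (0 < n)%N) bb R n)).
  apply: ler_sum => n _; rewrite /uu mulrA.
  have hb := bb_gt0 R n.
  have hn : 0 < (n.+1)%:R :> R by rewrite ltr0n.
  rewrite ler_pdivrMr //.
  have -> : (n.+1)%:R = n%:R + 1 :> R by rewrite natr1.
  have : 0 <= n%:R :> R by rewrite ler0n.
  nra.
by rewrite sum_pos // sum_bb bb0.
Qed.
End H.


Lemma key (R : realFieldType) (a : R) (ha : 0 < a) (j k : nat) (hj : (5 <= j)%N)
  (hk1 : (1 <= k)%N) (hk2 : (k <= (j - 1) %/ 2)%N) :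
  \sum_(t : {ffun 'I_k -> 'I_j} |
              ((\sum_(p < k) (t p : nat))%N == (j - k - 1)%N)
              && [forall p, (0 < t p)%N])
        ((a / 2) ^+ k.+1 * ((k.+1 * k.+2)%:R / 2)
         * \prod_(p < k) (gcoef a (t p) / ((t p : nat).+1)%:R))
  <= a ^+ j * (cc R j k * (2 * j%:R * bb R j - 1) * (1 - 2 * bb R j) ^+ k.-1).
Proof.
have h2k : (k * 2 <= j - 1)%N by rewrite -leq_divRL.
set m := (j - k - 1)%N.
have hm : (0 < m)%N by rewrite /m; lia.
set X := (a / 2) ^+ k.+1 * ((k.+1 * k.+2)%:R / 2).
set S := \sum_(t : {ffun 'I_k -> 'I_j} | ((\sum_(p < k) (t p : nat))%N == m) && [forall p, (0 < t p)%N])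
     \prod_(p < k) uu R (t p).
have E : \sum_(t : {ffun 'I_k -> 'I_j} | ((\sum_(p < k) (t p : nat))%N == m) && [forall p, (0 < t p)%N])
        (X * \prod_(p < k) (gcoef a (t p) / ((t p : nat).+1)%:R)) = X * a ^+ m * S.
  rewrite /S big_distrr /=; apply: eq_bigr => t /andP[/eqP hs _].
  rewrite -mulrA; congr (_ * _).
  rewrite -hs -prodrXr -big_split /=; apply: eq_bigr => p _.
  by rewrite gcoefE /uu [RHS]mulrA.
rewrite E.
set c := 2 * j%:R * bb R j - 1.
set U := 1 - 2 * bb R j.
have hj0 : (0 < j)%N by lia.
have hbj := bb_hi R j.
have hj' : 5 <= j%:R :> R by rewrite (ler_nat R 5 j).
have hb0 := bb_gt0 R j.
have hU : 0 <= U by rewrite /U; nra.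
have hm' : 0 < m%:R :> R by rewrite ltr0n.
have hCL := CL R (uu R) j k m (uu_ge0 R).
rewrite -/S U_eq // -/U in hCL.
have hA := A_le R j hj0.
have hS : S <= k%:R * c * U ^+ k.-1 / m%:R.
  rewrite ler_pdivlMr // mulrC; apply: le_trans hCL _.
  apply: ler_wpM2r; first exact: exprn_ge0.
  apply: ler_wpM2l; first by rewrite ler0n.
  exact: hA.
have ej : a ^+ j = a ^+ k.+1 * a ^+ m by rewrite -exprD; congr (_ ^+ _); rewrite /m; lia.
have hX : 0 <= X * a ^+ m.
  apply: mulr_ge0; last by apply: exprn_ge0; lra.
  apply: mulr_ge0; first by apply: exprn_ge0; lra.
  apply: divr_ge0; [exact: ler0n | lra].
apply: le_trans (ler_wpM2l hX hS) _.
rewrite le_eqVlt; apply/orP; left; apply/eqP.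
rewrite ej /X /cc -/m.
have -> : (a / 2) ^+ k.+1 = a ^+ k.+1 * (1/2) ^+ k.+1 by rewrite -exprMn mul1r.
move: ((1/2 : R) ^+ k.+1) (a ^+ k.+1) (a ^+ m) (U ^+ k.-1) => P Q T V.
by rewrite !mulrA; field; rewrite gt_eqF.
Qed.

Theorem mainTheorem7 (R : realFieldType) (a : R) (ha : 0 < a) (j : nat)
    (hj : (5 <= j)%N) :
  gcoef a j >=
    j%:R^-1 *
    \sum_(1 <= k < ((j - 1) %/ 2).+1)
      \sum_(t : {ffun 'I_k -> 'I_j} |
              ((\sum_(p < k) (t p : nat))%N == (j - k - 1)%N)
              && [forall p, (0 < t p)%N])
        ((a / 2) ^+ k.+1 * ((k.+1 * k.+2)%:R / 2)
         * \prod_(p < k) (gcoef a (t p) / ((t p : nat).+1)%:R)).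
Proof.
have hj' : 5 <= j%:R :> R by rewrite (ler_nat R 5 j).
have hji : 0 <= j%:R^-1 :> R by rewrite invr_ge0; lra.
set c := 2 * j%:R * bb R j - 1.
set U := 1 - 2 * bb R j.
have H : \sum_(1 <= k < ((j - 1) %/ 2).+1)
      \sum_(t : {ffun 'I_k -> 'I_j} |
              ((\sum_(p < k) (t p : nat))%N == (j - k - 1)%N)
              && [forall p, (0 < t p)%N])
        ((a / 2) ^+ k.+1 * ((k.+1 * k.+2)%:R / 2)
         * \prod_(p < k) (gcoef a (t p) / ((t p : nat).+1)%:R))
   <= \sum_(1 <= k < ((j - 1) %/ 2).+1) a ^+ j * (cc R j k * c * U ^+ k.-1).
  apply: ler_sum_nat => k /andP[hk1 hk2].
  apply: key => //; by rewrite -ltnS.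
apply: le_trans (ler_wpM2l hji H) _.
rewrite -mulr_sumr.
have -> : \sum_(1 <= i < ((j - 1) %/ 2).+1) cc R j i * c * U ^+ i.-1 = c * Phi R j U.
  rewrite /Phi mulr_sumr; apply: eq_bigr => i _; ring.
have hb := bb_gt0 R j.
have hfin := final_ineq R j (bb R j) hj hb (bb_lo R j (ltnW (leq_trans (isT : (1 < 5)%N) hj))) (bb_hi R j).
rewrite gcoefE.
have ha' : 0 <= a ^+ j by apply: exprn_ge0; lra.
have -> : a ^+ j * bb R j = j%:R^-1 * (a ^+ j * (j%:R * bb R j)).
  by field; rewrite gt_eqF //; lra.
apply: ler_wpM2l => //.
by apply: ler_wpM2l.
Qed.
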